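(* Let $P_n(x)=\sum_{k=0}^{n}\frac{(q^{-n},q^{n+2};q)_k\,(q(1+(q-1)x);q)_k\,q^k}{(q,q,q^2;q)_k}$ for $n\ge 0$ (the $q$-Hahn type family ${}_3\phi_2\!\left(q^{-n},q^{c+d+n+1},q(1+(q-1)x);q^{c+1},q^{d+1};q,q\right)$ with $c=0,d=1$). Then the sequence $(\beta_{n+1}/\beta_1)_{n\ge0}$ is the sequence of moments of the orthogonal polynomials $(P_n)_{n\ge0}$.
   Context: $q$ is an indeterminate; we work over $\mathbb{Q}(q)$. The $q$-Bernoulli–Carlitz numbers $\beta_n\in\mathbb{Q}(q)$ are defined by: for all $n\ge0$, $q\sum_{k=0}^{n}\binom{n}{k}q^k\beta_k-\beta_n$ equals $q-1$ if $n=0$, $1$ if $n=1$, and $0$ if $n>1$ (so $\beta_0=1$, $\beta_1=-1/(q+1)$). The $q$-Pochhammer symbol is $(a;q)_k=(1-a)(1-qa)\cdots(1-q^{k-1}a)$ and $(a_1,\dots,a_r;q)_k=\prod_i(a_i;q)_k$. A sequence $(m_n)_{n\ge0}$ with $m_0=1$ is called the sequence of moments of a family of polynomials $(P_n)_{n\ge0}$ ($\deg P_n=n$) if the linear functional $L$ on $\mathbb{Q}(q)[x]$ with $L(x^n)=m_n$ satisfies $L(P_mP_n)=0$ for $m\ne n$ and $L(P_n^2)\neq0$. *)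

(* Defs.v *)
From mathcomp Require Import all_boot all_order all_algebra.
Set Implicit Arguments. Unset Strict Implicit. Unset Printing Implicit Defensive.
Import Order.TTheory GRing.Theory.
Local Open Scope ring_scope.

Definition K : fieldType := {fraction {poly rat}}.
Definition qq : K := FracField.tofrac ('X : {poly rat}).

Definition qpoch (R : comNzRingType) (q a : R) (k : nat) : R :=
  \prod_(i < k) (1 - q ^+ i * a).

Definition carlitz_rhs (n : nat) : K :=
  if n == 0%N then qq - 1 else if n == 1%N then 1 else 0.

Definition is_qBernoulliCarlitz (b : nat -> K) : Prop :=
  forall n : nat,
    qq * (\sum_(k < n.+1) ('C(n, k))%:R * qq ^+ k * b k) - b n = carlitz_rhs n.

Definition moment_functional (m : nat -> K) (p : {poly K}) : K :=
  \sum_(i < size p) p`_i * m i.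

Definition is_moment_sequence (m : nat -> K) (P : nat -> {poly K}) : Prop :=
  [/\ m 0%N = 1,
      (forall n, size (P n) = n.+1),
      (forall i j, i <> j -> moment_functional m (P i * P j) = 0)
    & (forall n, moment_functional m (P n * P n) <> 0)].

Definition Pfam (n : nat) : {poly K} :=
  \sum_(k < n.+1)
    ((qpoch qq (qq ^- n) k * qpoch qq (qq ^+ n.+2) k * qq ^+ k)
       / (qpoch qq qq k * qpoch qq qq k * qpoch qq (qq ^+ 2) k)) *:
    qpoch (qq%:P) ((qq%:P) * (1 + (qq - 1)%:P * 'X)) k.

(* Main.v *)
Require Import Defs.
From mathcomp Require Import all_boot all_order all_algebra.
From mathcomp Require Import ring zify.
Set Implicit Arguments. Unset Strict Implicit. Unset Printing Implicit Defensive.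
Import GRing.Theory.
Local Open Scope ring_scope.

Section QP.
Variable R : comNzRingType.
Implicit Types (q a : R).

Lemma qpoch0 q a : qpoch q a 0 = 1.
Proof. by rewrite /qpoch big_ord0. Qed.

Lemma qpochS q a m : qpoch q a m.+1 = qpoch q a m * (1 - q ^+ m * a).
Proof. by rewrite /qpoch big_ord_recr. Qed.

Lemma qpochSl q a m : qpoch q a m.+1 = (1 - a) * qpoch q (q * a) m.
Proof.
rewrite /qpoch big_ord_recl expr0 mul1r; congr (_ * _).
by apply: eq_bigr => i _; rewrite /bump /= exprS mulrA (mulrC _ q) -mulrA.
Qed.

Lemma qpochD q a m n : qpoch q a (m + n) = qpoch q a m * qpoch q (q ^+ m * a) n.
Proof.
elim: n => [|n IH]; first by rewrite addn0 qpoch0 mulr1.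
by rewrite addnS !qpochS IH -mulrA exprD -mulrA (mulrCA (q ^+ m)).
Qed.

Lemma qpoch_eq0 q a m i : (i < m)%N -> q ^+ i * a = 1 -> qpoch q a m = 0.
Proof.
move=> him hi; have -> : m = (i + (1 + (m - i - 1)))%N by rewrite add1n subn1 prednK ?subn_gt0 // subnKC // ltnW.
by rewrite qpochD add1n qpochSl hi mulr1 subrr !mul0r mulr0.
Qed.

Lemma rmorph_qpoch (S : comNzRingType) (f : {rmorphism R -> S}) q a m :
  f (qpoch q a m) = qpoch (f q) (f a) m.
Proof. by rewrite /qpoch rmorph_prod; apply: eq_bigr => i _; rewrite rmorphB rmorph1 rmorphM rmorphXn. Qed.

End QP.

Module QQ.
Lemma qqX a : qq ^+ a = FracField.tofrac ('X^a : {poly rat}).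
Proof. by rewrite /qq rmorphXn. Qed.

Lemma qX_inj a b : qq ^+ a = qq ^+ b -> a = b.
Proof.
rewrite !qqX => /eqP; rewrite tofrac_eq => /eqP h; have := congr1 (fun p : {poly rat} => size p) h.
by rewrite !size_polyXn => -[].
Qed.
End QQ.

Section Gen.
Variable F : fieldType.
Variable q : F.
Hypothesis qinj : forall a b, q ^+ a = q ^+ b -> a = b.

Local Notation u := (q^-1).

Lemma q_neq0 : q != 0.
Proof. by apply/eqP => h; have := @qinj 1 2; rewrite h expr1 expr2 mulr0 => /(_ erefl). Qed.

Lemma qX_neq0 a : q ^+ a != 0.
Proof. by rewrite expf_neq0 // q_neq0. Qed.

Lemma qu_eq1 a b : (q ^+ a * u ^+ b == 1) = (a == b).
Proof.
apply/eqP/eqP => [h|->]; last by rewrite exprVn divff // qX_neq0.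
apply: qinj; rewrite exprVn in h.
by apply: (mulIf (invr_neq0 (qX_neq0 b))); rewrite h divff // qX_neq0.
Qed.

Lemma qu_neq1 a b : a != b -> 1 - q ^+ a * u ^+ b != 0.
Proof. by move=> h; rewrite subr_eq0 eq_sym qu_eq1. Qed.

Lemma qX_neq1 a : (0 < a)%N -> 1 - q ^+ a != 0.
Proof. by move=> h; have := @qu_neq1 a 0; rewrite expr0 mulr1; apply; rewrite -lt0n. Qed.

Lemma uX_neq1 a : (0 < a)%N -> 1 - u ^+ a != 0.
Proof. by move=> h; have := @qu_neq1 0 a; rewrite expr0 mul1r; apply; rewrite eq_sym -lt0n. Qed.

Lemma quK a b : q ^+ (a + b) * u ^+ b = q ^+ a.
Proof. by rewrite exprD -mulrA exprVn divff ?mulr1 // qX_neq0. Qed.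

Lemma quK' a b : q ^+ a * u ^+ (a + b) = u ^+ b.
Proof. by rewrite exprD mulrA exprVn divff ?mul1r // qX_neq0. Qed.

Lemma q_neq1 : 1 - q != 0.
Proof. by have := @qX_neq1 1; rewrite expr1; apply. Qed.

Lemma u_neq0 : u != 0.
Proof. by rewrite invr_neq0 // q_neq0. Qed.

Lemma uX_neq0 a : u ^+ a != 0.
Proof. by rewrite expf_neq0 // u_neq0. Qed.

Definition mfg (m : nat -> F) (p : {poly F}) : F := \sum_(i < size p) p`_i * m i.

Section MF.
Variable m : nat -> F.
Local Notation mf := (mfg m).

Lemma mfE n (p : {poly F}) : (size p <= n)%N -> mf p = \sum_(i < n) p`_i * m i.
Proof.
move=> h; rewrite /mfg (big_ord_widen _ (fun i => p`_i * m i) h) big_mkcond.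
apply: eq_bigr => i _; case: ifP => // /negbT; rewrite -leqNgt => hi.
by rewrite nth_default // mul0r.
Qed.

Lemma mfD (p r : {poly F}) : mf (p + r) = mf p + mf r.
Proof.
set n := maxn (size p) (size r).
rewrite (mfE (n := n) (p := p + r)); last by rewrite (leq_trans (size_polyD _ _)).
rewrite (mfE (n := n) (p := p)) ?leq_maxl // (mfE (n := n) (p := r)) ?leq_maxr //.
by rewrite -big_split; apply: eq_bigr => i _; rewrite coefD mulrDl.
Qed.

Lemma mfZ c (p : {poly F}) : mf (c *: p) = c * mf p.
Proof.
rewrite (mfE (n := size p) (p := c *: p)) ?size_scale_leq // (mfE (n := size p)) //.
by rewrite mulr_sumr; apply: eq_bigr => i _; rewrite coefZ mulrA.
Qed.

Lemma mf0 : mf 0 = 0.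
Proof. by rewrite /mfg size_poly0 big_ord0. Qed.

Lemma mfN (p : {poly F}) : mf (- p) = - mf p.
Proof. by rewrite -scaleN1r mfZ mulN1r. Qed.

Lemma mfB (p r : {poly F}) : mf (p - r) = mf p - mf r.
Proof. by rewrite mfD mfN. Qed.

Lemma mf_sum I (s : seq I) (P : pred I) (G : I -> {poly F}) :
  mf (\sum_(i <- s | P i) G i) = \sum_(i <- s | P i) mf (G i).
Proof. exact: (big_morph _ mfD mf0). Qed.

Lemma mfXn i : mf ('X^i) = m i.
Proof.
rewrite (mfE (n := i.+1)) ?size_polyXn // big_ord_recr /= big1 ?add0r ?coefXn ?eqxx ?mul1r //.
by move=> j _; rewrite coefXn (ltn_eqF (ltn_ord j)) mul0r.
Qed.

Lemma mfX (p : {poly F}) : mf ('X * p) = \sum_(i < size p) p`_i * m i.+1.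
Proof.
rewrite (mfE (n := (size p).+1)); last first.
  have [->|pn0] := eqVneq p 0; first by rewrite mulr0 size_poly0.
  by rewrite mulrC size_mulX.
by rewrite big_ord_recl coefXM eqxx mul0r add0r; apply: eq_bigr => i _; rewrite coefXM.
Qed.

End MF.

Definition crhs (n : nat) : F := if n == 0%N then q - 1 else if n == 1%N then 1 else 0.
Definition carl (b : nat -> F) : Prop :=
  forall n : nat, q * (\sum_(k < n.+1) ('C(n, k))%:R * q ^+ k * b k) - b n = crhs n.

Definition Ypl : {poly F} := 1 + (q - 1)%:P * 'X.
Definition Zpl : {poly F} := 1 + q%:P * 'X.

Lemma carlitz_mono beta (hb : carl beta) i :
  mfg beta (q *: ('X^i \Po Zpl) - 'X^i) = (Ypl * 'X^i)`_1.
Proof.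
rewrite mfB mfZ mfXn.
have -> : 'X^i \Po Zpl = \sum_(j < i.+1) (('C(i, j))%:R * q ^+ j) *: 'X^j.
  rewrite (rmorphXn (comp_poly Zpl)) /= comp_polyX /Zpl exprDn.
  apply: eq_bigr => j _; rewrite expr1n mul1r exprMn -rmorphXn /= mul_polyC.
  by rewrite scalerMnl -mulr_natl.
rewrite mf_sum.
under eq_bigr do rewrite mfZ mfXn.
move: (hb i); rewrite /crhs => ->.
rewrite /Ypl mulrDl mul1r -mulrA mul_polyC coefD coefZ coefXM coefXn /=.
case: i => [|[|i]] /=; rewrite ?coefXn /=.
all: by rewrite ?add0r ?mulr1 ?mulr0 ?addr0.
Qed.

Lemma carlitz_fe beta (hb : carl beta) (g : {poly F}) :
  mfg beta (q *: (g \Po Zpl) - g) = (Ypl * g)`_1.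
Proof.
apply/eqP; rewrite -subr_eq0; apply/eqP.
rewrite -[g]coefK poly_def.
elim/big_ind: _ => [|x y hx hy|i _].
- by rewrite comp_poly0 scaler0 subr0 mf0 mulr0 coef0 subr0.
- rewrite comp_polyD scalerDr opprD addrACA mfD mulrDr coefD opprD addrACA.
  by rewrite hx hy addr0.
- rewrite comp_polyZ scalerA mulrC -scalerA -scalerBr mfZ -scalerAr coefZ -mulrBr.
  by rewrite carlitz_mono // subrr mulr0.
Qed.

Local Notation Q := (q%:P : {poly F}).

Lemma horner_qpoch (c z : F) m : (qpoch Q (c%:P * 'X) m).[z] = qpoch q (c * z) m.
Proof. by rewrite /qpoch horner_prod; apply: eq_bigr => i _; rewrite !hornerE ?mulrA. Qed.

Lemma comp_qpoch (c : F) m (r : {poly F}) :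
  (qpoch Q (c%:P * 'X) m) \Po r = qpoch Q (c%:P * r) m.
Proof. by rewrite (rmorph_qpoch (comp_poly r)) /= comp_polyC comp_polyM comp_polyC comp_polyX. Qed.

Lemma X_drop (p : {poly F}) : 'X * drop_poly 1 p = p - (p`_0)%:P.
Proof.
apply/polyP => i; rewrite coefXM coef_drop_poly coefB coefC.
by case: i => [|i] /=; [rewrite subrr | rewrite subr0 addn1].
Qed.

Lemma aux_YZ (R : comNzRingType) (a x : R) : 1 + (a - 1) * (1 + a * x) = a * (1 + (a - 1) * x).
Proof. ring. Qed.

Lemma YZ : Ypl \Po Zpl = Q * Ypl.
Proof.
rewrite /Ypl /Zpl comp_polyD comp_polyM comp_polyC comp_polyX comp_polyC polyCB polyC1.
exact: aux_YZ.
Qed.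

Section N.
Variable beta : nat -> F.
Hypothesis hb : carl beta.
Definition Nf (p : {poly F}) := mfg beta (p \Po Ypl).

Lemma NfD p r : Nf (p + r) = Nf p + Nf r.
Proof. by rewrite /Nf comp_polyD mfD. Qed.
Lemma NfZ c p : Nf (c *: p) = c * Nf p.
Proof. by rewrite /Nf comp_polyZ mfZ. Qed.
Lemma Nf0 : Nf 0 = 0.
Proof. by rewrite /Nf comp_poly0 mf0. Qed.
Lemma NfB p r : Nf (p - r) = Nf p - Nf r.
Proof. by rewrite /Nf comp_polyB mfB. Qed.
Lemma Nf_sum I (s : seq I) (P : pred I) (G : I -> {poly F}) :
  Nf (\sum_(i <- s | P i) G i) = \sum_(i <- s | P i) Nf (G i).
Proof. exact: (big_morph _ NfD Nf0). Qed.

Lemma N_fe (G : {poly F}) :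
  Nf (q *: (G \Po (Q * 'X)) - G) = (('X * G) \Po Ypl)`_1.
Proof.
have e1 : (G \Po (Q * 'X)) \Po Ypl = (G \Po Ypl) \Po Zpl.
  by rewrite -!comp_polyA comp_polyM comp_polyC comp_polyX YZ.
by rewrite /Nf comp_polyB comp_polyZ e1 carlitz_fe // comp_polyM comp_polyX.
Qed.

End N.
End Gen.

Lemma aux_diff (R : comNzRingType) (P a c Qv : R) :
  P * (1 - a * Qv * c) - (1 - c) * P = c * (1 - a * Qv) * P.
Proof. ring. Qed.

Lemma aux_perm (R : comNzRingType) (A X1 B P : R) : A * X1 * B * P = X1 * (A * B * P).
Proof. ring. Qed.

Lemma aux_perm2 (R : comNzRingType) (A X1 B C : R) : A * (X1 * C * B) = X1 * (A * C * B).
Proof. ring. Qed.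

Lemma horner_qpochr (R : comNzRingType) (q c z : R) (r : {poly R}) m :
  (qpoch (q%:P) (c%:P * r) m).[z] = qpoch q (c * r.[z]) m.
Proof. by rewrite /qpoch horner_prod; apply: eq_bigr => i _; rewrite !hornerE ?mulrA. Qed.

Lemma qpoch_a0 (R : comNzRingType) (q : R) m : qpoch q 0 m = 1.
Proof. by rewrite /qpoch big1 // => i _; rewrite mulr0 subr0. Qed.

Lemma qpoch_diff (R : comNzRingType) (Qv c : R) m :
  qpoch Qv (Qv * c) m.+1 - qpoch Qv c m.+1 = c * (1 - Qv ^+ m.+1) * qpoch Qv (Qv * c) m.
Proof. by rewrite qpochS qpochSl mulrA exprSr aux_diff. Qed.

Section Gen2.
Variable F : fieldType.
Variable q : F.
Hypothesis qinj : forall a b, q ^+ a = q ^+ b -> a = b.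
Local Notation u := (q^-1).
Local Notation Q := (q%:P : {poly F}).

Definition psi k : {poly F} := qpoch Q ((u ^+ k)%:P * 'X) k.
Definition phi l : {poly F} := qpoch Q (Q * 'X) l.

Variable beta : nat -> F.
Hypothesis hb : carl q beta.
Local Notation N := (Nf q beta).

Lemma N_psiphi k l : N (psi k * ((1 - 'X) * phi l)) =
  (1 - q) * qpoch q (u ^+ k.+1) k.+1 * qpoch q q l / (u ^+ k.+1 * (1 - q ^+ (k + l + 2))).
Proof.
set a := u ^+ k.+1.
set m := (k + l + 1)%N.
set H := qpoch Q (a%:P * 'X) m.+1.
set G := drop_poly 1 H.
have H0 : H`_0 = 1 by rewrite -horner_coef0 horner_qpoch mulr0 qpoch_a0.
have hG : 'X * G = H - 1 by rewrite X_drop H0.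
have e2 : 'X * (q *: (G \Po (Q * 'X)) - G) = H \Po (Q * 'X) - H.
  rewrite mulrBr hG -scalerAr.
  have -> : q *: ('X * (G \Po (Q * 'X))) = ('X * G) \Po (Q * 'X).
    by rewrite comp_polyM comp_polyX -mul_polyC mulrA.
  by rewrite hG comp_polyB comp_polyC opprB addrA subrK.
have e3 : H \Po (Q * 'X) = qpoch Q (Q * (a%:P * 'X)) m.+1.
  by rewrite /H comp_qpoch mulrCA.
have hqa : q * a = u ^+ k by rewrite /a exprS mulrA divff ?mul1r // q_neq0.
have e5 : qpoch Q (Q * (a%:P * 'X)) m = psi k * ((1 - 'X) * phi l).
  rewrite mulrA -polyCM hqa /m -addnA qpochD; congr (_ * _).
  rewrite mulrA -rmorphXn /= -polyCM exprVn divff ?qX_neq0 // polyC1 mul1r addn1.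
  by rewrite qpochSl.
have e4 : q *: (G \Po (Q * 'X)) - G = (a * (1 - q ^+ m.+1)) *: (psi k * ((1 - 'X) * phi l)).
  have Xn0 : ('X : {poly F}) != 0 by rewrite polyX_eq0.
  apply: (mulfI Xn0); rewrite e2 e3 qpoch_diff -e5 -mul_polyC.
  have -> : (a * (1 - q ^+ m.+1))%:P = a%:P * (1 - Q ^+ m.+1).
    by rewrite polyCM polyCB polyC1 -!(rmorphXn (@polyC F)).
  by rewrite aux_perm.
have e6 : (('X * G) \Po Ypl q)`_1 = (1 - q) * qpoch q a k.+1 * qpoch q q l.
  rewrite hG.
  have -> : H = qpoch Q (a%:P * 'X) k.+1 * ((1 - 'X) * phi l).
    rewrite /H; have -> : m.+1 = (k.+1 + l.+1)%N by rewrite /m addn1 addSn addnS.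
    rewrite qpochD; congr (_ * _).
    rewrite mulrA -rmorphXn /= -polyCM /a exprVn divff ?qX_neq0 // polyC1 mul1r.
    by rewrite qpochSl.
  rewrite comp_polyB comp_polyC coefB coefC /= subr0.
  rewrite !comp_polyM comp_qpoch comp_polyB comp_polyC comp_polyX /phi comp_qpoch.
  have -> : 1 - Ypl q = 'X * (1 - q)%:P.
    by rewrite /Ypl opprD addrA subrr add0r -mulNr -polyCN opprB mulrC.
  rewrite aux_perm2 coefXM /= -horner_coef0 !hornerM hornerC.
  rewrite !horner_qpochr /Ypl !hornerE.
  by rewrite (mulrC (qpoch q a k.+1)).
have := N_fe hb G; rewrite e4 NfZ e6 => h.
have hc : a * (1 - q ^+ m.+1) != 0.
  by rewrite mulf_neq0 ?uX_neq0 // qX_neq1.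
have em : (k + l + 2)%N = m.+1 by rewrite /m addn1 addn2.
by rewrite em -h (mulrC (a * _)) mulfK.
Qed.

End Gen2.

Lemma horner_qp (R : comNzRingType) (c z : R) (r : {poly R}) m :
  (qpoch c%:P r m).[z] = qpoch c r.[z] m.
Proof. by rewrite /qpoch horner_prod; apply: eq_bigr => i _; rewrite !hornerE. Qed.

Lemma qpoch_neq0 (F : fieldType) (q a : F) m :
  (forall i, (i < m)%N -> q ^+ i * a != 1) -> qpoch q a m != 0.
Proof.
elim: m => [|m IH] h; first by rewrite qpoch0 oner_neq0.
rewrite qpochS mulf_neq0 ?IH //; first by move=> i hi; apply: h; lia.
by rewrite subr_eq0 eq_sym h.
Qed.

Section Saal.
Variable F : fieldType.
Variable q : F.
Hypothesis qinj : forall a b, q ^+ a = q ^+ b -> a = b.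
Local Notation u := (q^-1).
Local Notation Q := (q%:P : {poly F}).
Variable n : nat.

Lemma uX_eq1 a : (u ^+ a == 1) = (a == 0%N).
Proof. by have := qu_eq1 qinj 0 a; rewrite expr0 mul1r eq_sym => ->. Qed.

Lemma qX_eq1 a : (q ^+ a == 1) = (a == 0%N).
Proof. by have := qu_eq1 qinj a 0; rewrite expr0 mulr1 => ->. Qed.

Lemma qX_neq1' a : (0 < a)%N -> q ^+ a != 1.
Proof. by move=> h; rewrite qX_eq1 -lt0n. Qed.

Definition cf l := (qpoch q (q ^- n) l * qpoch q (q ^+ n.+2) l * q ^+ l) /
                   (qpoch q q l * qpoch q q l * qpoch q (q ^+ 2) l).
Definition dd l := cf l * qpoch q q l.
Definition SS k := \sum_(l < n.+1) dd l / (1 - q ^+ (k + l + 2)).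

Definition LH l := dd l * qpoch q (u ^+ l) l * qpoch q q (n - l).
Definition BB l := qpoch u (u ^+ l.+2) n.
Definition CC := LH 0 / BB 0.

Lemma qq_neq0 l : qpoch q q l != 0.
Proof. by apply: qpoch_neq0 => i _; rewrite -exprSr qX_neq1'. Qed.

Lemma qq2_neq0 l : qpoch q (q ^+ 2) l != 0.
Proof. by apply: qpoch_neq0 => i _; rewrite -exprD qX_neq1' // addn2. Qed.

Lemma BB_neq0 l : BB l != 0.
Proof. by apply: qpoch_neq0 => i _; rewrite -exprD uX_eq1 addnS. Qed.

Lemma LH0 : LH 0 = qpoch q q n.
Proof. by rewrite /LH /dd /cf !qpoch0 expr0 !mulr1 divr1 !mul1r subn0. Qed.

Lemma CC_neq0 : CC != 0.
Proof. by rewrite /CC LH0 mulf_neq0 ?invr_neq0 ?qq_neq0 ?BB_neq0. Qed.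

Lemma aux_B (R : comNzRingType) (P x y : R) : (1 - x) * P = P * (1 - y) -> P * (1 - y) = (1 - x) * P.
Proof. by move=> ->. Qed.

Lemma BB_rec l : BB l.+1 * (1 - u ^+ l.+2) = BB l * (1 - u ^+ (n + l.+2)).
Proof.
have h1 := qpochSl u (u ^+ l.+2) n.
have h2 := qpochS u (u ^+ l.+2) n.
rewrite h1 -exprS -exprD in h2.
by rewrite /BB mulrC h2.
Qed.

Lemma LH_rec l : (l < n)%N -> LH l.+1 * (1 - u ^+ l.+2) = LH l * (1 - u ^+ (n + l.+2)).
Proof.
move=> hl.
rewrite /LH /dd /cf.
have -> : (n - l = (n - l.+1).+1)%N by lia.
rewrite [qpoch q (u ^+ l.+1) _]qpochSl !qpochS.
have e1 : q * u ^+ l.+1 = u ^+ l by rewrite exprS mulrA divff ?mul1r // q_neq0.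
rewrite e1 !exprVn.
have E1 : q ^+ l.+1 = q ^+ l * q by rewrite exprSr.
have E2 : q ^+ l.+2 = q ^+ l * q * q by rewrite !exprSr.
have E3 : q ^+ n = q ^+ l * q ^+ (n - l.+1) * q by rewrite -exprD -exprSr; congr (_ ^+ _); lia.
have E4 : q ^+ n.+2 = q ^+ n * q * q by rewrite !exprSr.
have E5 : q ^+ (n + l.+2) = q ^+ n * q ^+ l.+2 by rewrite exprD.
rewrite E5 E4 E2 E1 E3.
have h1 := qq_neq0 l. have h2 := qq2_neq0 l.
have h3 : 1 - q ^+ l * q != 0 by rewrite -exprSr qX_neq1.
have h4 : 1 - q ^+ l * q ^+ 2 != 0 by rewrite -exprD qX_neq1 // addn2.
have h5 : 1 - q ^+ l * q * q != 0 by rewrite -!exprSr qX_neq1.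
have h6 := qX_neq0 qinj l. have h7 := qX_neq0 qinj (n - l.+1). have h8 := q_neq0 qinj.
field.
by rewrite h1 h2 h3 h4 h6 h7 h8.
Qed.

Lemma LH_eq l : (l <= n)%N -> LH l = CC * BB l.
Proof.
elim: l => [|l IH] hl; first by rewrite /CC (divfK (BB_neq0 0)).
have hne := uX_neq1 qinj (ltn0Sn l.+1).
apply: (mulIf hne); rewrite (LH_rec hl) (IH (ltnW hl)) -mulrA -BB_rec.
by rewrite mulrA.
Qed.

Lemma qu1 a : q ^+ a * u ^+ a = 1.
Proof. by rewrite exprVn divff // qX_neq0. Qed.

Definition Qp : {poly F} := \sum_(l < n.+1) dd l *:
  (qpoch Q ((q ^+ 2)%:P * 'X) l * qpoch Q ((q ^+ (l + 3))%:P * 'X) (n - l)).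
Definition Rp : {poly F} := CC *: qpoch (u%:P) 'X n.

Lemma Qp_eval z : Qp.[z] = \sum_(l < n.+1) dd l *
  (qpoch q (q ^+ 2 * z) l * qpoch q (q ^+ (l + 3) * z) (n - l)).
Proof.
rewrite /Qp horner_sum; apply: eq_bigr => l _.
by rewrite hornerZ hornerM !horner_qp !hornerE.
Qed.

Lemma Rp_eval z : Rp.[z] = CC * qpoch u z n.
Proof. by rewrite /Rp hornerZ horner_qp hornerX. Qed.

Lemma Qp_node l : (l <= n)%N -> Qp.[u ^+ l.+2] = LH l.
Proof.
move=> hl; have hl' : (l < n.+1)%N by [].
rewrite Qp_eval (bigD1 (Ordinal hl')); last by [].
rewrite big1; last first.
  move=> j hj.
  have [ljl|lj] := ltnP j l.
    have hi : (l - j - 1 < n - j)%N by lia.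
    have hq : q ^+ (l - j - 1) * (q ^+ (j + 3) * u ^+ l.+2) = 1.
      rewrite mulrA -exprD.
      have -> : (l - j - 1 + (j + 3) = l.+2)%N by lia.
      exact: qu1.
    by rewrite (qpoch_eq0 hi hq) mulr0 mulr0.
  have ljn : (l < j)%N.
    rewrite ltn_neqAle lj andbT; apply/eqP => e; move: hj; rewrite -val_eqE /= e.
    by rewrite eqxx.
  have hq : q ^+ l * (q ^+ 2 * u ^+ l.+2) = 1 by rewrite mulrA -exprD addn2 qu1.
  by rewrite (qpoch_eq0 ljn hq) mul0r mulr0.
rewrite /= addr0.
have ea : q ^+ 2 * u ^+ l.+2 = u ^+ l by rewrite -add2n quK'.
have eb : q ^+ (l + 3) * u ^+ l.+2 = q.
  by rewrite (_ : (l + 3 = 1 + l.+2)%N) ?quK ?expr1 //; lia.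
by rewrite ea eb /LH mulrA.
Qed.

Lemma size_qp_le (R : comNzRingType) (c : R) (r : {poly R}) m :
  (size r <= 2)%N -> (size (qpoch c%:P r m) <= m.+1)%N.
Proof.
move=> hr; elim: m => [|m IH]; first by rewrite qpoch0 size_poly1.
rewrite qpochS; apply: (leq_trans (size_polyMleq _ _)).
have h2 : (size (1 - c%:P ^+ m * r)%R <= 2)%N.
  apply: (leq_trans (size_polyD _ _)); rewrite geq_max size_poly1 /= size_polyN.
  rewrite -(rmorphXn (@polyC R)); apply: (leq_trans (size_polyMleq _ _)).
  rewrite -subn1 leq_subLR; apply: (leq_trans (leq_add (size_polyC_leq1 (c ^+ m)) hr)).
  by [].
rewrite -subn1 leq_subLR; apply: (leq_trans (leq_add IH h2)); lia.
Qed.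

Lemma size_Qp : (size Qp <= n.+1)%N.
Proof.
rewrite /Qp; elim/big_ind: _ => [|x y hx hy|l _].
- by rewrite size_poly0.
- by apply: (leq_trans (size_polyD _ _)); rewrite geq_max hx hy.
apply: (leq_trans (size_scale_leq _ _)); apply: (leq_trans (size_polyMleq _ _)).
have h1 : (size (qpoch Q ((q ^+ 2)%:P * 'X)%R l) <= l.+1)%N.
  apply: size_qp_le; apply: (leq_trans (size_polyMleq _ _)); rewrite size_polyX.
  rewrite -subn1 leq_subLR; apply: (leq_trans (leq_add (size_polyC_leq1 _) (leqnn 2))); by [].
have h2 : (size (qpoch Q ((q ^+ (l + 3))%:P * 'X)%R (n - l)) <= (n - l).+1)%N.
  apply: size_qp_le; apply: (leq_trans (size_polyMleq _ _)); rewrite size_polyX.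
  rewrite -subn1 leq_subLR; apply: (leq_trans (leq_add (size_polyC_leq1 _) (leqnn 2))); by [].
rewrite -subn1 leq_subLR; apply: (leq_trans (leq_add h1 h2)); have := ltn_ord l; lia.
Qed.

Lemma size_Rp : (size Rp <= n.+1)%N.
Proof.
apply: (leq_trans (size_scale_leq _ _)); apply: size_qp_le.
by rewrite size_polyX.
Qed.

Lemma Qp_Rp : Qp = Rp.
Proof.
apply/eqP; rewrite -subr_eq0; apply/negPn/negP => hD.
have := @max_poly_roots _ _ [seq u ^+ l.+2 | l <- iota 0 n.+1] hD.
rewrite size_map size_iota.
have hs : (size (Qp - Rp)%R <= n.+1)%N.
  apply: (leq_trans (size_polyD _ _)); rewrite geq_max size_Qp size_polyN size_Rp.
  by [].
have hall : all (root (Qp - Rp)) [seq u ^+ l.+2 | l <- iota 0 n.+1].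
  apply/allP => z /mapP [l hl ->]; rewrite mem_iota add0n in hl.
  have hl' : (l <= n)%N by [].
  by rewrite rootE hornerD hornerN Qp_node // Rp_eval LH_eq // subrr.
have huniq : uniq [seq u ^+ l.+2 | l <- iota 0 n.+1].
  rewrite map_inj_in_uniq ?iota_uniq // => a b _ _.
  rewrite !exprVn => /invr_inj /qinj; by case.
move=> /(_ hall huniq) h; have := leq_trans h hs; by rewrite ltnn.
Qed.

Lemma aux_div (d y A B : F) : y != 0 -> d / y * (A * (y * B)) = d * (A * B).
Proof. move=> h; field; exact: h. Qed.

Lemma SS_eq k : (k <= n)%N -> SS k * qpoch q (q ^+ (k + 2)) n.+1 = Qp.[q ^+ k].
Proof.
move=> hk; rewrite Qp_eval /SS mulr_suml; apply: eq_bigr => -[l hl] _ /=.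
have -> : n.+1 = (l + (n - l).+1)%N by lia.
rewrite qpochD qpochSl.
have e1 : q ^+ l * q ^+ (k + 2) = q ^+ (k + l + 2) by rewrite -exprD; congr (_ ^+ _); lia.
have e2 : q * (q ^+ (k + l + 2)) = q ^+ (l + 3) * q ^+ k by rewrite -exprS -exprD; congr (_ ^+ _); lia.
have e3 : q ^+ (k + 2) = q ^+ 2 * q ^+ k by rewrite -exprD addnC.
have hy : 1 - q ^+ (k + l + 2) != 0 by apply: (qX_neq1 qinj); lia.
by rewrite e1 e2 e3 (aux_div _ _ _ hy).
Qed.

Lemma Om_neq0 k : qpoch q (q ^+ (k + 2)) n.+1 != 0.
Proof. by apply: qpoch_neq0 => i _; rewrite -exprD qX_neq1'; last lia. Qed.

Lemma SS0 k : (k < n)%N -> SS k = 0.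
Proof.
move=> hk; apply: (mulIf (Om_neq0 k)); rewrite mul0r (SS_eq (ltnW hk)) Qp_Rp Rp_eval.
have hq : u ^+ k * q ^+ k = 1 by rewrite mulrC qu1.
by rewrite (qpoch_eq0 hk hq) mulr0.
Qed.

Lemma SSn : SS n != 0.
Proof.
have := SS_eq (leqnn n); rewrite Qp_Rp Rp_eval => h.
apply/eqP => h0; move: h; rewrite h0 mul0r => /esym/eqP; rewrite mulf_eq0 (negbTE CC_neq0) /=.
apply/negP; apply: qpoch_neq0 => i hi.
rewrite mulrC qu_eq1; last exact: qinj.
by rewrite gtn_eqF.
Qed.

End Saal.

Lemma size_qpX (F : fieldType) (Qc c : F) m : Qc != 0 -> c != 0 ->
  size (qpoch Qc%:P (c%:P * 'X) m) = m.+1.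
Proof.
move=> hQ hc; elim: m => [|m IH]; first by rewrite qpoch0 size_poly1.
have hf : 1 - Qc%:P ^+ m * (c%:P * 'X) = (- (Qc ^+ m * c))%:P * 'X + 1%:P.
  by rewrite polyC1 addrC polyCN mulNr polyCM (rmorphXn (@polyC F)) mulrA.
have hs : size (1 - Qc%:P ^+ m * (c%:P * 'X)) = 2.
  rewrite hf size_MXaddC polyC_eq0 oppr_eq0 mulf_eq0 expf_eq0 (negbTE hQ) (negbTE hc).
  by rewrite andbF /= size_polyC oppr_eq0 mulf_eq0 expf_eq0 (negbTE hQ) (negbTE hc) andbF.
have hn1 : qpoch Qc%:P (c%:P * 'X) m != 0 by rewrite -size_poly_eq0 IH.
have hn2 : 1 - Qc%:P ^+ m * (c%:P * 'X) != 0 by rewrite -size_poly_eq0 hs.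
by rewrite qpochS size_mul // IH hs addn2.
Qed.

Lemma coef_top (R : nzSemiRingType) (p : {poly R}) n : (size p = n.+1)%N -> p`_n != 0.
Proof.
move=> h; have : lead_coef p != 0 by rewrite lead_coef_eq0 -size_poly_eq0 h.
by rewrite lead_coefE h.
Qed.

Lemma size_cancel (F : fieldType) (p r : {poly F}) s :
  (size p <= s.+1)%N -> size r = s.+1 -> (size (p - (p`_s / r`_s) *: r)%R <= s)%N.
Proof.
move=> hp hr; apply/leq_sizeP => j hj.
rewrite coefB coefZ.
have [->|hjs] := eqVneq j s.
  by rewrite divfK ?subrr // coef_top.
have hj' : (s < j)%N by rewrite ltn_neqAle eq_sym hjs hj.
have /leq_sizeP h1 := hp; have /leq_sizeP h2 : (size r <= s.+1)%N by rewrite hr.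
by rewrite (h1 j hj') (h2 j hj') mulr0 subr0.
Qed.

Lemma aux_E (F : fieldType) (c e1 A B a y : F) :
  c * (e1 * A * B / (a * y)) = (e1 * A / a) * (c * B / y).
Proof. rewrite invfM; ring. Qed.

Section Main.
Variable F : fieldType.
Variable q : F.
Hypothesis qinj : forall a b, q ^+ a = q ^+ b -> a = b.
Local Notation u := (q^-1).
Local Notation Q := (q%:P : {poly F}).
Variable beta : nat -> F.
Hypothesis hb : carl q beta.
Local Notation N := (Nf q beta).

Definition Ptil n : {poly F} := \sum_(l < n.+1) cf q n l *: phi q l.
Definition W p := N ((1 - 'X) * p).
Definition EE k := (1 - q) * qpoch q (u ^+ k.+1) k.+1 / u ^+ k.+1.

Lemma WD p r : W (p + r) = W p + W r.
Proof. by rewrite /W mulrDr NfD. Qed.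
Lemma WZ c p : W (c *: p) = c * W p.
Proof. by rewrite /W -scalerAr NfZ. Qed.
Lemma WB p r : W (p - r) = W p - W r.
Proof. by rewrite /W mulrBr NfB. Qed.
Lemma W0 : W 0 = 0.
Proof. by rewrite /W mulr0 Nf0. Qed.

Lemma W_psi k n : W (psi q k * Ptil n) = EE k * SS q n k.
Proof.
rewrite /W /Ptil mulr_sumr mulr_sumr Nf_sum /SS /dd mulr_sumr.
apply: eq_bigr => l _.
rewrite -scalerAr -scalerAr NfZ mulrCA N_psiphi //.
by rewrite /EE aux_E.
Qed.

Lemma size_psi k : size (psi q k) = k.+1.
Proof. by rewrite /psi (size_qpX _ (q_neq0 qinj) (uX_neq0 qinj k)). Qed.

Lemma size_phi l : size (phi q l) = l.+1.
Proof. by rewrite /phi (size_qpX _ (q_neq0 qinj) (q_neq0 qinj)). Qed.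

Lemma orth n (p : {poly F}) : (size p <= n)%N -> W (p * Ptil n) = 0.
Proof.
suff H : forall s (p : {poly F}), (size p <= s)%N -> (s <= n)%N -> W (p * Ptil n) = 0.
  by move=> hp; apply: (H n).
elim=> [|s IH] {}p hp hs.
  by move: hp; rewrite size_poly_leq0 => /eqP ->; rewrite mul0r W0.
set c := p`_s / (psi q s)`_s.
have hp' := size_cancel hp (size_psi s).
have -> : p = (p - c *: psi q s) + c *: psi q s by rewrite subrK.
rewrite mulrDl WD IH ?(ltnW hs) // add0r -scalerAl WZ W_psi.
by rewrite (SS0 qinj hs) !mulr0.
Qed.

Lemma size_Ptil_le n : (size (Ptil n) <= n.+1)%N.
Proof.
rewrite /Ptil; elim/big_ind: _ => [|x y hx hy|l _].
- by rewrite size_poly0.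
- by apply: (leq_trans (size_polyD _ _)); rewrite geq_max hx hy.
by apply: (leq_trans (size_scale_leq _ _)); rewrite size_phi.
Qed.

Lemma qpoch_qn_neq0 n : qpoch q (q ^- n) n != 0.
Proof.
apply: qpoch_neq0 => i hi; rewrite -exprVn qu_eq1 //.
by rewrite ltn_eqF.
Qed.

Lemma cf_nn_neq0 n : cf q n n != 0.
Proof.
have h1 := qpoch_qn_neq0 n.
have h2 : qpoch q (q ^+ n.+2) n != 0.
  by apply: qpoch_neq0 => i _; rewrite -exprD; apply: (qX_neq1' qinj); lia.
have h3 := qX_neq0 qinj n. have h4 := qq_neq0 qinj n. have h5 := qq2_neq0 qinj n.
by rewrite /cf !mulf_neq0 // invr_neq0 // !mulf_neq0.
Qed.

Lemma Ptil_top n : (Ptil n)`_n != 0.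
Proof.
rewrite /Ptil coef_sum big_ord_recr /= big1 ?add0r.
  by rewrite coefZ mulf_neq0 ?cf_nn_neq0 // coef_top // size_phi.
move=> l _; rewrite coefZ.
have /leq_sizeP h : (size (phi q l) <= n)%N by rewrite size_phi.
by rewrite h // mulr0.
Qed.

Lemma size_Ptil n : size (Ptil n) = n.+1.
Proof.
apply/eqP; rewrite eqn_leq size_Ptil_le /=.
rewrite ltnNge; apply/negP => /leq_sizeP h.
by move: (Ptil_top n); rewrite h ?eqxx.
Qed.

Lemma EE_neq0 k : EE k != 0.
Proof.
rewrite /EE mulf_neq0 ?invr_neq0 ?uX_neq0 // mulf_neq0 ?q_neq1 //.
apply: qpoch_neq0 => i hi; rewrite qu_eq1 //.
by rewrite ltn_eqF.
Qed.

Lemma norm n : W (Ptil n * Ptil n) != 0.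
Proof.
set c := (Ptil n)`_n / (psi q n)`_n.
have hr := size_cancel (size_Ptil_le n) (size_psi n).
have e : Ptil n * Ptil n = (Ptil n - c *: psi q n) * Ptil n + c *: (psi q n * Ptil n).
  by rewrite scalerAl -mulrDl subrK.
rewrite e WD (orth hr) add0r WZ W_psi.
have hc : c != 0.
  rewrite /c mulf_neq0 ?Ptil_top // invr_neq0 //; apply: coef_top; exact: size_psi.
have h1 := EE_neq0 n. have h2 := SSn qinj n.
by apply: mulf_neq0 => //; apply: mulf_neq0.
Qed.

End Main.

Lemma aux0 (F : fieldType) (q x : F) : q * x - x = q - 1 -> (x - 1) * (q - 1) = 0.
Proof.
move=> h; have -> : (x - 1) * (q - 1) = (q * x - x) - (q - 1) by ring.
by rewrite h subrr.
Qed.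

Section Fin.
Variable F : fieldType.
Variable q : F.
Hypothesis qinj : forall a b, q ^+ a = q ^+ b -> a = b.
Local Notation Q := (q%:P : {poly F}).
Variable beta : nat -> F.
Hypothesis hb : carl q beta.

Definition Pfg (n : nat) : {poly F} :=
  \sum_(k < n.+1)
    ((qpoch q (q ^- n) k * qpoch q (q ^+ n.+2) k * q ^+ k)
       / (qpoch q q k * qpoch q q k * qpoch q (q ^+ 2) k)) *:
    qpoch (q%:P) ((q%:P) * (1 + (q - 1)%:P * 'X)) k.

Lemma Pfg_comp n : Pfg n = Ptil q n \Po Ypl q.
Proof.
rewrite /Ptil /Pfg (rmorph_sum (comp_poly (Ypl q))); apply: eq_bigr => l _.
by rewrite /= comp_polyZ /phi comp_qpoch.
Qed.

Lemma beta0 : beta 0 = 1.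
Proof.
have h0 := hb 0; rewrite /crhs /= big_ord_recr big_ord0 /= add0r bin0 mul1r expr0 mul1r in h0.
have := aux0 h0; move/eqP; rewrite mulf_eq0 => /orP [/eqP|].
  by move/eqP; rewrite subr_eq0 => /eqP.
by rewrite -oppr_eq0 opprB (negbTE (q_neq1 qinj)).
Qed.

Lemma beta1_neq0 : beta 1 != 0.
Proof.
apply/eqP => h.
have h1 := hb 1; rewrite /crhs /= !big_ord_recr big_ord0 /= add0r in h1.
rewrite h beta0 mulr0 addr0 subr0 bin0 expr0 !mulr1 in h1.
by move: (q_neq1 qinj); rewrite h1 subrr eqxx.
Qed.

Lemma mom_rel (A B : {poly F}) :
  mfg (fun n => beta n.+1 / beta 1) ((A \Po Ypl q) * (B \Po Ypl q)) =
  ((1 - q)^-1 / beta 1) * W q beta (A * B).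
Proof.
set p := (A \Po Ypl q) * (B \Po Ypl q).
have e1 : mfg (fun n => beta n.+1 / beta 1) p = mfg beta ('X * p) / beta 1.
  by rewrite mfX /mfg mulr_suml; apply: eq_bigr => i _; rewrite mulrA.
have e2 : 'X * p = ((1 - q)^-1 *: ((1 - 'X) * (A * B))) \Po Ypl q.
  rewrite comp_polyZ !comp_polyM comp_polyB comp_polyC comp_polyX.
  have -> : 1 - Ypl q = (1 - q)%:P * 'X.
    by rewrite /Ypl opprD addrA subrr add0r -mulNr -polyCN opprB.
  by rewrite -mul_polyC !mulrA -polyCM (mulVf (q_neq1 qinj)) polyC1 mul1r.
rewrite e1 e2 -/(Nf q beta _) NfZ /W.
by rewrite mulrAC.
Qed.

Theorem main_gen :
  [/\ (fun n => beta n.+1 / beta 1) 0%N = 1,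
      (forall n, size (Pfg n) = n.+1),
      (forall i j, i <> j -> mfg (fun n => beta n.+1 / beta 1) (Pfg i * Pfg j) = 0)
    & (forall n, mfg (fun n => beta n.+1 / beta 1) (Pfg n * Pfg n) <> 0)].
Proof.
have hYs : size (Ypl q) = 2.
  have -> : Ypl q = (q - 1)%:P * 'X + 1%:P by rewrite /Ypl polyC1 addrC.
  rewrite size_MXaddC oner_eq0 andbF size_polyC subr_eq0.
  by rewrite eq_sym -subr_eq0 (negbTE (q_neq1 qinj)).
split.
- by rewrite /= divff // beta1_neq0.
- by move=> n; rewrite Pfg_comp size_comp_poly2 // size_Ptil.
- move=> i j hij; rewrite !Pfg_comp mom_rel.
  have W0' : forall a b : nat, (a < b)%N -> W q beta (Ptil q a * Ptil q b) = 0.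
    by move=> a b hab; apply: orth => //; rewrite size_Ptil.
  case: (ltngtP i j) => h.
  + by rewrite W0' // mulr0.
  + by rewrite (mulrC (Ptil q i)) W0' // mulr0.
  + by move: hij; rewrite h.
- move=> n; rewrite Pfg_comp mom_rel; apply/eqP.
  rewrite mulf_neq0 ?norm // mulf_neq0 ?invr_neq0 ?beta1_neq0 ?q_neq1 //.
Qed.

End Fin.

Unset Implicit Arguments.

Theorem mainTheorem2 (beta : nat -> K) :
  is_qBernoulliCarlitz beta ->
  is_moment_sequence (fun n => beta n.+1 / beta 1%N) Pfam.
Proof. move=> hb; exact: (main_gen QQ.qX_inj hb). Qed.
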